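(* Consider the following Markov decision problem with a finite horizon of $N\ge 1$ decision epochs. The state space is $[0,\infty)\times[0,\infty)$ and at every state the action set is $\{0,1\}$. In state $\xi=(\xi_1,\xi_2)$, taking action $a\in\{0,1\}$ yields the (time-homogeneous) reward $r(\xi,a)=\xi_{1+a}$. The next state $\xi'$ is obtained as follows: if $a=1$ then $\xi'=(\xi_1+\zeta,\xi_2)$ with $\zeta$ having density $p_1$; if $a=0$ then $\xi'=(\xi_1,\xi_2+\zeta)$ with $\zeta$ having density $p_2$. Here $p_1,p_2$ are probability densities on $[0,\infty)$ with respect to a $\sigma$-finite measure $\lambda$, having a common finite mean $\theta$. Then the greedy policy, which takes action $1$ when $\xi_1<\xi_2$ and action $0$ when $\xi_1>\xi_2$ (with either action allowed when $\xi_1=\xi_2$), is optimal under the total expected reward criterion: for every $N\ge1$ and every initial state, it attains the maximum expected total reward over $N$ epochs among all policies.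
   Context: In the application of the paper, $\xi=(\Gamma_{\mathbf R}[R(n)],\Gamma_{\mathbf S}[S(n)])$, action $1$ means reading the next record from source $\mathbf R$, and the reward is the expected number of new matches; but the claim is the abstract statement above. ''Policies'' means general (history-dependent, possibly randomized) Markov decision policies. *)

(* Defs.v *)
From HB Require Import structures.
From mathcomp Require Import all_boot all_order all_algebra.
From mathcomp Require Import all_classical all_reals all_analysis.
Set Implicit Arguments. Unset Strict Implicit. Unset Printing Implicit Defensive.
Import Order.TTheory GRing.Theory Num.Theory.
Local Open Scope classical_set_scope.
Local Open Scope ring_scope.

Section MDP.
Variable R : realType.

(* State histories of k past epochs: iterated products of the state space
   R * R (with its product Borel sigma-algebra); the last (outermost right)
   component is the current state.  histT 0 = R * R (only the current state). *)
Fixpoint histT (k : nat) : {d : measure_display & measurableType d} :=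
  match k with
  | 0 => existT (fun d => measurableType d) _ ((R * R)%type : measurableType _)
  | k.+1 => existT (fun d => measurableType d) _
             ((projT2 (histT k) * (R * R))%type : measurableType _)
  end.

Definition hist (k : nat) : Type := projT2 (histT k).

Definition cur (k : nat) : hist k -> R * R :=
  match k return hist k -> R * R with
  | 0 => fun h => h
  | k.+1 => fun h => h.2
  end.

(* A (history-dependent, randomized) policy: given the list of past actions
   (most recent first; true = action 1, false = action 0) and the history of
   states, it gives the probability of choosing action 1. *)
Definition policy := forall acts : seq bool, hist (size acts) -> R.

Definition is_policy (pi : policy) : Prop :=
  forall acts : seq bool,
    measurable_fun setT (pi acts) /\
    (forall h, 0 <= pi acts h <= 1).

Definition greedy (pi : policy) : Prop :=
  forall acts (h : hist (size acts)),
    ((cur h).1 < (cur h).2 -> pi acts h = 1) /\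
    ((cur h).2 < (cur h).1 -> pi acts h = 0).

Local Open Scope ereal_scope.
Unset Implicit Arguments.

Fixpoint value (lam : {measure set R -> \bar R}) (p1 p2 : R -> R)
  (pi : policy) (n : nat) (acts : seq bool) (h : hist (size acts)) : \bar R :=
  match n with
  | 0 => 0
  | n.+1 =>
    let xi := cur h in
    let q := pi acts h in
    q%:E * (xi.2%:E +
      \int[lam]_(z in [set z : R | (0 <= z)%R])
        (value lam p1 p2 pi n (true :: acts)
           ((h, (xi.1 + z, xi.2)%R) : hist (size (true :: acts)))
         * (p1 z)%:E))
    + (1 - q)%:E * (xi.1%:E +
      \int[lam]_(z in [set z : R | (0 <= z)%R])
        (value lam p1 p2 pi n (false :: acts)
           ((h, (xi.1, xi.2 + z)%R) : hist (size (false :: acts)))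
         * (p2 z)%:E))
  end.

Definition density_mean (lam : {measure set R -> \bar R}) (p : R -> R)
  (theta : R) : Prop :=
  measurable_fun setT p /\
  (forall z, (0 <= z)%R -> (0 <= p z)%R) /\
  \int[lam]_(z in [set z : R | (0 <= z)%R]) (p z)%:E = 1 /\
  \int[lam]_(z in [set z : R | (0 <= z)%R]) (z * p z)%:E = theta%:E.

End MDP.

(* Main.v *)
Require Import Defs.
From HB Require Import structures.
From mathcomp Require Import all_boot all_order all_algebra.
From mathcomp Require Import all_classical all_reals all_analysis measurable_realfun.
Import Order.TTheory GRing.Theory Num.Theory.
Local Open Scope classical_set_scope.
Local Open Scope ring_scope.

Section S.
Variable R : realType.
Variable lam : {measure set R -> \bar R}.
Hypothesis lamsf : sigma_finite setT lam.
Definition lamS : set R -> \bar R := fun A => lam A.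
HB.instance Definition _ := Measure.on lamS.
HB.instance Definition _ := @Measure_isSigmaFinite.Build _ _ _ lamS lamsf.
Local Open Scope ereal_scope.

Definition D := [set z : R | (0 <= z)%R].
Lemma mD : measurable D.
Proof. rewrite (_ : D = `[0%R, +oo[%classic); first exact: measurable_itv.
 by apply/seteqP; split => x /=; rewrite in_itv /= andbT. Qed.

Lemma mono_int (f g : R -> \bar R) : (forall z, D z -> 0 <= f z) ->
  (forall z, D z -> f z <= g z) ->
  \int[lam]_(z in D) f z <= \int[lam]_(z in D) g z.
Proof.
move=> f0 fg; have g0 : forall z, D z -> 0 <= g z.
  by move=> z Dz; apply: le_trans (f0 _ Dz) (fg _ Dz).
rewrite !ge0_integralE //; apply: le_ereal_sup => _ [h /= hf <-].
exists h => //= x; apply: le_trans (hf x) _.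
rewrite /patch; case: ifP => // /[!in_setE] Dx; exact: fg.
Qed.

Lemma fubD (F : R -> R -> \bar R) :
  measurable_fun setT (fun t : R * R => F t.1 t.2) ->
  (forall a b, D a -> D b -> 0 <= F a b) ->
  \int[lam]_(a in D) \int[lam]_(b in D) F a b =
  \int[lam]_(b in D) \int[lam]_(a in D) F a b.
Proof.
move=> mF F0.
pose f := (fun t : R * R => F t.1 t.2) \_ (D `*` D).
have fE a b : f (a, b) = if `[< D a /\ D b >] then F a b else 0.
  rewrite /f /patch; case: (pselect (D a /\ D b)) => H.
    by rewrite mem_set // asboolT.
  by rewrite memNset // asboolF.
have f0 t : 0 <= f t.
  case: t => a b; rewrite fE; case: (pselect (D a /\ D b)) => [[Da Db]|H].
    by rewrite asboolT //; exact: F0.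
  by rewrite asboolF.
have mf : measurable_fun setT f.
  apply/(measurable_restrictT _ _).1; first exact: measurableX mD mD.
  exact: measurable_funTS.
have := @fubini_tonelli _ _ _ _ R lamS lamS f mf f0.
have E1 : \int[lam]_(a in D) \int[lam]_(b in D) F a b =
          \int[lamS]_a \int[lamS]_b f (a, b).
  rewrite integral_mkcond; apply: eq_integral => a _.
  rewrite /patch; case: (pselect (D a)) => Da.
    rewrite mem_set // integral_mkcond; apply: eq_integral => b _.
    rewrite fE /patch; case: (pselect (D b)) => Db.
      by rewrite mem_set // asboolT.
    by rewrite memNset // asboolF // => -[].
  rewrite memNset // integral0_eq // => b _.
  by rewrite fE asboolF // => -[].
have E2 : \int[lam]_(b in D) \int[lam]_(a in D) F a b =
          \int[lamS]_b \int[lamS]_a f (a, b).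
  rewrite integral_mkcond; apply: eq_integral => b _.
  rewrite /patch; case: (pselect (D b)) => Db.
    rewrite mem_set // integral_mkcond; apply: eq_integral => a _.
    rewrite fE /patch; case: (pselect (D a)) => Da.
      by rewrite mem_set // asboolT.
    by rewrite memNset // asboolF // => -[].
  rewrite memNset // integral0_eq // => a _.
  by rewrite fE asboolF // => -[].
by rewrite E1 E2.
Qed.

Variables (p1 p2 : R -> R) (theta : R).
Hypothesis dm1 : density_mean R lam p1 theta.
Hypothesis dm2 : density_mean R lam p2 theta.

Fixpoint W (n : nat) (s : R * R) : \bar R :=
  match n with
  | 0 => 0
  | n.+1 => maxe
     ((Num.max s.2 0%R)%:E + \int[lam]_(z in D) (W n (s.1 + z, s.2)%R * (p1 z)%:E))
     ((Num.max s.1 0%R)%:E + \int[lam]_(z in D) (W n (s.1, s.2 + z)%R * (p2 z)%:E))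
  end.

Definition I1 n (s : R * R) := \int[lam]_(z in D) (W n (s.1 + z, s.2)%R * (p1 z)%:E).
Definition I0 n (s : R * R) := \int[lam]_(z in D) (W n (s.1, s.2 + z)%R * (p2 z)%:E).
Definition Q1 n (s : R * R) := (Num.max s.2 0%R)%:E + I1 n s.
Definition Q0 n (s : R * R) := (Num.max s.1 0%R)%:E + I0 n s.
Lemma WS n s : W n.+1 s = maxe (Q1 n s) (Q0 n s).
Proof. by []. Qed.

Lemma p1_ge0 z : D z -> (0 <= p1 z)%R.
Proof. by case: dm1 => _ [+ _]; apply. Qed.
Lemma p2_ge0 z : D z -> (0 <= p2 z)%R.
Proof. by case: dm2 => _ [+ _]; apply. Qed.
Lemma mp1 : measurable_fun setT p1. Proof. by case: dm1. Qed.
Lemma mp2 : measurable_fun setT p2. Proof. by case: dm2. Qed.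

Lemma W_ge0 n s : 0 <= W n s.
Proof.
elim: n s => [//|n IH] s; rewrite WS le_max; apply/orP; left.
apply: adde_ge0; first by rewrite lee_fin le_max lexx orbT.
apply: integral_ge0 => z Dz; apply: mule_ge0 => //; rewrite lee_fin; exact: p1_ge0.
Qed.

Lemma I1_ge0 n s : 0 <= I1 n s.
Proof. apply: integral_ge0 => z Dz; apply: mule_ge0 (W_ge0 _ _) _; rewrite lee_fin; exact: p1_ge0. Qed.
Lemma I0_ge0 n s : 0 <= I0 n s.
Proof. apply: integral_ge0 => z Dz; apply: mule_ge0 (W_ge0 _ _) _; rewrite lee_fin; exact: p2_ge0. Qed.

Lemma mparam (G : R * R -> \bar R) (p : R -> R) (g : R * R -> R -> R * R) :
  measurable_fun setT G -> (forall s, 0 <= G s) ->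
  measurable_fun setT p -> (forall z, D z -> (0 <= p z)%R) ->
  measurable_fun setT (fun t : (R * R) * R => g t.1 t.2) ->
  measurable_fun setT (fun s => \int[lam]_(z in D) (G (g s z) * (p z)%:E)).
Proof.
move=> mG G0 mp p0 mg.
pose f := (fun t : (R * R) * R => G (g t.1 t.2) * (p t.2)%:E) \_ (setT `*` D).
have fE s z : f (s, z) = if `[< D z >] then G (g s z) * (p z)%:E else 0.
  rewrite /f /patch; case: (pselect (D z)) => H.
    by rewrite mem_set // asboolT.
  by rewrite memNset ?asboolF // => -[].
have f0 t : 0 <= f t.
  case: t => s z; rewrite fE; case: (pselect (D z)) => [Dz|H].
    by rewrite asboolT // mule_ge0 // lee_fin; exact: p0.
  by rewrite asboolF.
have mf : measurable_fun setT f.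
  apply/(measurable_restrictT _ _).1; first exact: measurableX measurableT mD.
  apply: measurable_funTS; apply: emeasurable_funM.
    exact: measurableT_comp mG mg.
  by apply/measurable_EFinP; apply: measurableT_comp mp measurable_snd.
suff -> : (fun s => \int[lam]_(z in D) (G (g s z) * (p z)%:E)) = fubini_F lamS f.
  exact: (@measurable_fun_fubini_tonelli_F _ _ _ _ R lamS f mf f0).
apply/funext => s; rewrite /fubini_F [LHS]integral_mkcond.
apply: eq_integral => z _; rewrite fE /patch; case: (pselect (D z)) => H.
  by rewrite mem_set // asboolT.
by rewrite memNset // asboolF.
Qed.

Lemma mW n : measurable_fun setT (W n).
Proof.
elim: n => [|n IH]; first exact: measurable_cst.
apply: measurable_maxe; apply: emeasurable_funD.
- apply/measurable_EFinP; exact: measurable_maxr.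
- apply: (@mparam _ _ (fun s z => (s.1 + z, s.2)%R) IH (W_ge0 n) mp1 p1_ge0 _).
  apply: measurable_fun_pair => /=.
    apply: measurable_funD => //; exact: measurableT_comp measurable_fst measurable_fst.
  exact: measurableT_comp measurable_snd measurable_fst.
- apply/measurable_EFinP; exact: measurable_maxr.
- apply: (@mparam _ _ (fun s z => (s.1, s.2 + z)%R) IH (W_ge0 n) mp2 p2_ge0 _).
  apply: measurable_fun_pair => /=.
    exact: measurableT_comp measurable_fst measurable_fst.
  apply: measurable_funD => //; exact: measurableT_comp measurable_snd measurable_fst.
Qed.

Lemma int_lin (p : R -> R) (c : R) (J : R -> \bar R) :
  density_mean R lam p theta -> (0 <= c)%R ->
  measurable_fun setT J -> (forall z, D z -> 0 <= J z) ->
  \int[lam]_(z in D) (((c + z)%R%:E + J z) * (p z)%:E) =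
  (c + theta)%R%:E + \int[lam]_(z in D) (J z * (p z)%:E).
Proof.
move=> [mp [p0 [int1 intz]]] c0 mJ J0.
have pz : {in D, forall z, ((c + z)%R%:E + J z) * (p z)%:E =
    ((c * p z)%R%:E + (z * p z)%R%:E) + J z * (p z)%:E}.
  move=> z /[!in_setE] Dz; rewrite ge0_muleDl ?lee_fin ?addr_ge0 ?J0 //.
  by rewrite -EFinM mulrDl EFinD.
rewrite (eq_integral _ _ pz) ge0_integralD //; first last.
- apply: measurable_funTS; apply: emeasurable_funM => //.
  exact/measurable_EFinP.
- by move=> z Dz; apply: mule_ge0; [exact: J0|rewrite lee_fin; exact: p0].
- apply: measurable_funTS; apply/measurable_EFinP.
  by apply: measurable_funD; apply: measurable_funM.
- by move=> z Dz; rewrite -EFinD lee_fin addr_ge0 // mulr_ge0 //; exact: p0.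
- exact: mD.
rewrite ge0_integralD //; first last.
- apply: measurable_funTS; apply/measurable_EFinP; exact: measurable_funM.
- by move=> z Dz; rewrite lee_fin mulr_ge0 //; exact: p0.
- apply: measurable_funTS; apply/measurable_EFinP; exact: measurable_funM.
- by move=> z Dz; rewrite lee_fin mulr_ge0 //; exact: p0.
- exact: mD.
rewrite intz; under eq_integral do rewrite EFinM.
rewrite ge0_integralZl_EFin //.
  by rewrite int1 mule1 EFinD.
all: try exact: mD.
all: try (by move=> z Dz; rewrite lee_fin; exact: p0).
exact/measurable_funTS/measurable_EFinP.
Qed.

Lemma msh1 (H : R * R -> \bar R) (x y : R) : measurable_fun setT H ->
  measurable_fun setT (fun z : R => H (x + z, y)%R).
Proof.
move=> mH; apply: measurableT_comp mH _; apply: measurable_fun_pair => //.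
exact: measurable_funD.
Qed.
Lemma msh2 (H : R * R -> \bar R) (x y : R) : measurable_fun setT H ->
  measurable_fun setT (fun z : R => H (x, y + z)%R).
Proof.
move=> mH; apply: measurableT_comp mH _; apply: measurable_fun_pair => //.
exact: measurable_funD.
Qed.

Lemma mI1 n : measurable_fun setT (I1 n).
Proof.
apply: (@mparam _ _ (fun s z => (s.1 + z, s.2)%R) (mW n) (W_ge0 n) mp1 p1_ge0 _).
apply: measurable_fun_pair => /=.
  apply: measurable_funD => //; exact: measurableT_comp measurable_fst measurable_fst.
exact: measurableT_comp measurable_snd measurable_fst.
Qed.
Lemma mI0 n : measurable_fun setT (I0 n).
Proof.
apply: (@mparam _ _ (fun s z => (s.1, s.2 + z)%R) (mW n) (W_ge0 n) mp2 p2_ge0 _).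
apply: measurable_fun_pair => /=.
  exact: measurableT_comp measurable_fst measurable_fst.
apply: measurable_funD => //; exact: measurableT_comp measurable_snd measurable_fst.
Qed.
Lemma mQ1 n : measurable_fun setT (Q1 n).
Proof.
apply: emeasurable_funD; last exact: mI1.
apply/measurable_EFinP; exact: measurable_maxr.
Qed.
Lemma mQ0 n : measurable_fun setT (Q0 n).
Proof.
apply: emeasurable_funD; last exact: mI0.
apply/measurable_EFinP; exact: measurable_maxr.
Qed.

Lemma swapI n x y :
  \int[lam]_(z in D) (I1 n (x, y + z)%R * (p2 z)%:E) =
  \int[lam]_(z in D) (I0 n (x + z, y)%R * (p1 z)%:E).
Proof.
pose F a b := W n (x + a, y + b)%R * (p1 a)%:E * (p2 b)%:E.
have F0 a b : D a -> D b -> 0 <= F a b.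
  move=> Da Db; apply: mule_ge0; first apply: mule_ge0 (W_ge0 _ _) _.
    by rewrite lee_fin; exact: p1_ge0.
  by rewrite lee_fin; exact: p2_ge0.
have mF : measurable_fun setT (fun t : R * R => F t.1 t.2).
  apply: emeasurable_funM; first apply: emeasurable_funM.
  - apply: measurableT_comp (mW n) _; apply: measurable_fun_pair.
      exact: measurable_funD.
    exact: measurable_funD.
  - by apply/measurable_EFinP; exact: measurableT_comp mp1 _.
  - by apply/measurable_EFinP; exact: measurableT_comp mp2 _.
transitivity (\int[lam]_(b in D) \int[lam]_(a in D) F a b).
  apply: eq_integral => b /[!in_setE] Db; rewrite /I1 /=.
  rewrite -ge0_integralZr //.
  - exact: mD.
  - apply: measurable_funTS; apply: emeasurable_funM.
      exact: (msh1 _ x (y + b)%R (mW n)).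
    by apply/measurable_EFinP; exact: mp1.
  - by move=> a Da; apply: mule_ge0 (W_ge0 _ _) _; rewrite lee_fin; exact: p1_ge0.
  - by rewrite lee_fin; exact: p2_ge0.
rewrite -fubD //.
apply: eq_integral => a /[!in_setE] Da; rewrite /I0 /=.
rewrite -ge0_integralZr //.
- apply: eq_integral => b _; by rewrite /F muleAC.
- exact: mD.
- apply: measurable_funTS; apply: emeasurable_funM.
    exact: (msh2 _ (x + a)%R y (mW n)).
  by apply/measurable_EFinP; exact: mp2.
- by move=> b Db; apply: mule_ge0 (W_ge0 _ _) _; rewrite lee_fin; exact: p2_ge0.
- by rewrite lee_fin; exact: p1_ge0.
Qed.

Definition Key n := forall x y : R, (0 <= x)%R -> (0 <= y)%R ->
  ((x <= y)%R -> Q0 n (x, y) <= Q1 n (x, y)) /\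
  ((y <= x)%R -> Q1 n (x, y) <= Q0 n (x, y)).

Lemma key0 : Key 0.
Proof.
move=> x y x0 y0; rewrite /Q0 /Q1 /I0 /I1.
rewrite !integral0_eq; try by move=> z _; rewrite /= mul0e.
by rewrite !adde0 !lee_fin (max_l x0) (max_l y0); split.
Qed.

Lemma W1 n : Key n -> forall x y : R, (0 <= x)%R -> (0 <= y)%R ->
  (x <= y)%R -> W n.+1 (x, y) = (y%:E + I1 n (x, y)).
Proof.
move=> K x y x0 y0 xy; rewrite WS max_l; last by case: (K x y x0 y0) => + _; apply.
by rewrite /Q1 /= (max_l y0).
Qed.
Lemma W0 n : Key n -> forall x y : R, (0 <= x)%R -> (0 <= y)%R ->
  (y <= x)%R -> W n.+1 (x, y) = (x%:E + I0 n (x, y)).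
Proof.
move=> K x y x0 y0 xy; rewrite WS max_r; last by case: (K x y x0 y0) => _; apply.
by rewrite /Q0 /= (max_l x0).
Qed.

Lemma keyS n : Key n -> Key n.+1.
Proof.
move=> K x y x0 y0.
set S := \int[lam]_(z in D) (I0 n (x + z, y)%R * (p1 z)%:E).
have LA : (y + theta)%R%:E + \int[lam]_(z in D) (I1 n (x, y + z)%R * (p2 z)%:E)
          <= I0 n.+1 (x, y).
  rewrite /I0 /= -int_lin //; last first.
  - by move=> z _; exact: I1_ge0.
  - exact: (msh2 _ x y (mI1 n)).
  apply: ge0_le_integral.
  - exact: mD.
  - move=> z /= Dz; apply: mule_ge0; last by rewrite lee_fin; exact: p2_ge0.
    by apply: adde_ge0; [rewrite lee_fin addr_ge0|exact: I1_ge0].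
  - apply: measurable_funTS; apply: emeasurable_funM; last first.
      by apply/measurable_EFinP; exact: mp2.
    apply: emeasurable_funD; last exact: (msh2 _ x y (mI1 n)).
    by apply/measurable_EFinP; exact: measurable_funD.
  - apply: measurable_funTS; apply: emeasurable_funM; last first.
      by apply/measurable_EFinP; exact: mp2.
    exact: (msh2 _ x y (mW n.+1)).
  - move=> z Dz; apply: lee_wpmul2r; first by rewrite lee_fin; exact: p2_ge0.
    rewrite le_max; apply/orP; left.
    by rewrite max_l ?addr_ge0.
have LB : (x + theta)%R%:E + S <= I1 n.+1 (x, y).
  rewrite /I1 /S /= -int_lin //; last first.
  - by move=> z _; exact: I0_ge0.
  - exact: (msh1 _ x y (mI0 n)).
  apply: ge0_le_integral.
  - exact: mD.
  - move=> z /= Dz; apply: mule_ge0; last by rewrite lee_fin; exact: p1_ge0.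
    by apply: adde_ge0; [rewrite lee_fin addr_ge0|exact: I0_ge0].
  - apply: measurable_funTS; apply: emeasurable_funM; last first.
      by apply/measurable_EFinP; exact: mp1.
    apply: emeasurable_funD; last exact: (msh1 _ x y (mI0 n)).
    by apply/measurable_EFinP; exact: measurable_funD.
  - apply: measurable_funTS; apply: emeasurable_funM; last first.
      by apply/measurable_EFinP; exact: mp1.
    exact: (msh1 _ x y (mW n.+1)).
  - move=> z Dz; apply: lee_wpmul2r; first by rewrite lee_fin; exact: p1_ge0.
    rewrite le_max; apply/orP; right.
    by rewrite max_l ?addr_ge0.
have Exy : (x + (y + theta) = y + (x + theta))%R.
  by rewrite addrA (addrC x y) -addrA.
split => xy.
- have E : I0 n.+1 (x, y) =
    (y + theta)%R%:E + \int[lam]_(z in D) (I1 n (x, y + z)%R * (p2 z)%:E).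
    rewrite /I0 -int_lin //; last first.
    - by move=> z _; exact: I1_ge0.
    - exact: (msh2 _ x y (mI1 n)).
    apply: eq_integral => z /[!in_setE] Dz.
    rewrite (W1 _ K) //; last by rewrite (le_trans xy) // lerDl.
    exact: addr_ge0.
  rewrite /Q0 /= (max_l x0) E addeA swapI -EFinD Exy -/S.
  by rewrite /Q1 /= (max_l y0) EFinD -addeA leeD2l.
- have E : I1 n.+1 (x, y) = (x + theta)%R%:E + S.
    rewrite /I1 /S -int_lin //; last first.
    - by move=> z _; exact: I0_ge0.
    - exact: (msh1 _ x y (mI0 n)).
    apply: eq_integral => z /[!in_setE] Dz.
    rewrite (W0 _ K) //; last by rewrite (le_trans xy) // lerDl.
    exact: addr_ge0.
  rewrite /Q1 /= (max_l y0) E addeA -EFinD -Exy.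
  rewrite swapI -/S in LA.
  by rewrite /Q0 /= (max_l x0) EFinD -addeA leeD2l.
Qed.

Lemma key n : Key n.
Proof. elim: n => [|n IH]; [exact: key0|exact: keyS]. Qed.

Lemma W1' n (s : R * R) : (0 <= s.1)%R -> (0 <= s.2)%R -> (s.1 <= s.2)%R ->
  W n.+1 s = s.2%:E + I1 n s.
Proof. by case: s => x y x0 y0 xy; rewrite (W1 _ (key n)). Qed.
Lemma W0' n (s : R * R) : (0 <= s.1)%R -> (0 <= s.2)%R -> (s.2 <= s.1)%R ->
  W n.+1 s = s.1%:E + I0 n s.
Proof. by case: s => x y x0 y0 xy; rewrite (W0 _ (key n)). Qed.

Lemma conv_le (q : R) (a b M : \bar R) : (0 <= q <= 1)%R -> 0 <= a -> 0 <= b ->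
  a <= M -> b <= M -> q%:E * a + (1 - q)%R%:E * b <= M.
Proof.
move=> /andP[q0 q1] a0 b0; case: M => [m| |]; last 2 first.
- by move=> _ _; rewrite leey.
- by move=> aM; have := le_trans a0 aM.
case: a a0 => [a| |] a0 //; case: b b0 => [b| |] b0 //; rewrite ?leye_eq //.
rewrite !lee_fin => am bm.
have h1 : (q * a <= q * m)%R by rewrite ler_wpM2l.
have h2 : ((1 - q) * b <= (1 - q) * m)%R by rewrite ler_wpM2l // subr_ge0.
apply: (le_trans (lerD h1 h2)); by rewrite -mulrDl addrC subrK mul1r.
Qed.

Lemma conv_eq (q : R) (a : \bar R) : (0 <= q <= 1)%R -> 0 <= a ->
  q%:E * a + (1 - q)%R%:E * a = a.
Proof.
move=> /andP[q0 q1] a0; rewrite -ge0_muleDl ?lee_fin ?subr_ge0 //.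
by rewrite -EFinD addrC subrK mul1e.
Qed.

Lemma value_le (pi : policy R) : is_policy pi ->
  forall n acts (h : hist R (size acts)),
  (0 <= (cur h).1)%R -> (0 <= (cur h).2)%R ->
  0 <= value R lam p1 p2 pi n acts h /\ value R lam p1 p2 pi n acts h <= W n (cur h).
Proof.
move=> Hpi n; elim: n => [|n IH] acts h c1 c2; first by split.
have [_ q01] := Hpi acts; have /andP[q0 q1] := q01 h.
set xi := cur h.
have HA : forall z, D z ->
    0 <= value R lam p1 p2 pi n (true :: acts)
      ((h, (xi.1 + z, xi.2)%R) : hist R (size (true :: acts))) /\
    value R lam p1 p2 pi n (true :: acts)
      ((h, (xi.1 + z, xi.2)%R) : hist R (size (true :: acts))) <= W n (xi.1 + z, xi.2)%R.
  by move=> z Dz; apply: IH => //=; rewrite addr_ge0.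
have HB : forall z, D z ->
    0 <= value R lam p1 p2 pi n (false :: acts)
      ((h, (xi.1, xi.2 + z)%R) : hist R (size (false :: acts))) /\
    value R lam p1 p2 pi n (false :: acts)
      ((h, (xi.1, xi.2 + z)%R) : hist R (size (false :: acts))) <= W n (xi.1, xi.2 + z)%R.
  by move=> z Dz; apply: IH => //=; rewrite addr_ge0.
set A := \int[lam]_(z in D) (value R lam p1 p2 pi n (true :: acts)
      ((h, (xi.1 + z, xi.2)%R) : hist R (size (true :: acts))) * (p1 z)%:E).
set B := \int[lam]_(z in D) (value R lam p1 p2 pi n (false :: acts)
      ((h, (xi.1, xi.2 + z)%R) : hist R (size (false :: acts))) * (p2 z)%:E).
have A0 : 0 <= A.
  apply: integral_ge0 => z Dz; apply: mule_ge0; first by case: (HA z Dz).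
  by rewrite lee_fin; exact: p1_ge0.
have B0 : 0 <= B.
  apply: integral_ge0 => z Dz; apply: mule_ge0; first by case: (HB z Dz).
  by rewrite lee_fin; exact: p2_ge0.
have AI : A <= I1 n xi.
  apply: mono_int => z Dz.
    apply: mule_ge0; first by case: (HA z Dz).
    by rewrite lee_fin; exact: p1_ge0.
  apply: lee_wpmul2r; first by rewrite lee_fin; exact: p1_ge0.
  by case: (HA z Dz).
have BI : B <= I0 n xi.
  apply: mono_int => z Dz.
    apply: mule_ge0; first by case: (HB z Dz).
    by rewrite lee_fin; exact: p2_ge0.
  apply: lee_wpmul2r; first by rewrite lee_fin; exact: p2_ge0.
  by case: (HB z Dz).
have -> : value R lam p1 p2 pi n.+1 acts h =
    (pi acts h)%:E * (xi.2%:E + A) + (1 - pi acts h)%R%:E * (xi.1%:E + B) by [].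
split.
  by apply: adde_ge0; apply: mule_ge0; rewrite ?lee_fin ?subr_ge0 // adde_ge0.
apply: conv_le => //.
- by apply: adde_ge0; rewrite ?lee_fin.
- by apply: adde_ge0; rewrite ?lee_fin.
- rewrite WS le_max; apply/orP; left.
  by rewrite /Q1 (max_l c2) leeD2l.
- rewrite WS le_max; apply/orP; right.
  by rewrite /Q0 (max_l c1) leeD2l.
Qed.

Lemma value_greedy (pig : policy R) : is_policy pig -> greedy pig ->
  forall n acts (h : hist R (size acts)),
  (0 <= (cur h).1)%R -> (0 <= (cur h).2)%R ->
  value R lam p1 p2 pig n acts h = W n (cur h).
Proof.
move=> Hpi Hg n; elim: n => [|n IH] acts h c1 c2; first by [].
have [_ q01] := Hpi acts; have /andP[q0 q1] := q01 h.
have [g1 g2] := Hg acts h.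
set xi := cur h in c1 c2 g1 g2 *.
have EA : \int[lam]_(z in D) (value R lam p1 p2 pig n (true :: acts)
      ((h, (xi.1 + z, xi.2)%R) : hist R (size (true :: acts))) * (p1 z)%:E) = I1 n xi.
  apply: eq_integral => z /[!in_setE] Dz; rewrite IH //=; exact: addr_ge0.
have EB : \int[lam]_(z in D) (value R lam p1 p2 pig n (false :: acts)
      ((h, (xi.1, xi.2 + z)%R) : hist R (size (false :: acts))) * (p2 z)%:E) = I0 n xi.
  apply: eq_integral => z /[!in_setE] Dz; rewrite IH //=; exact: addr_ge0.
have -> : value R lam p1 p2 pig n.+1 acts h =
    (pig acts h)%:E * (xi.2%:E + I1 n xi) + (1 - pig acts h)%R%:E * (xi.1%:E + I0 n xi).
  by rewrite -EA -EB.
have [x12|x21|x12] := ltgtP xi.1 xi.2.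
- rewrite g1 // subrr mul1e mul0e adde0 W1' //; exact: ltW.
- rewrite g2 // subr0 mul1e mul0e add0e W0' //; exact: ltW.
- have E1 : W n.+1 xi = xi.2%:E + I1 n xi by apply: W1' => //; rewrite x12.
  have E0 : W n.+1 xi = xi.1%:E + I0 n xi by apply: W0' => //; rewrite x12.
  rewrite -E1 -E0 conv_eq ?q0 ?q1 //; exact: W_ge0.
Qed.
End S.

Theorem theorem2p1 (R : realType) (lam : {measure set R -> \bar R})
  (p1 p2 : R -> R) (theta : R) :
  sigma_finite setT lam ->
  density_mean R lam p1 theta ->
  density_mean R lam p2 theta ->
  forall pig : policy R, is_policy pig -> greedy pig ->
  forall (N : nat), (1 <= N)%N ->
  forall x1 x2 : R, 0 <= x1 -> 0 <= x2 ->
  forall pi : policy R, is_policy pi ->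
    (value R lam p1 p2 pi N [::] ((x1, x2) : hist R 0)
     <= value R lam p1 p2 pig N [::] ((x1, x2) : hist R 0))%E.
Proof.
move=> sf d1 d2 pig Hpig Hg N _ x1 x2 x0 y0 pi Hpi.
rewrite (value_greedy R lam sf p1 p2 theta d1 d2 pig Hpig Hg N [::] ((x1, x2) : hist R 0)) //.
by case: (value_le R lam p1 p2 theta d1 d2 pi Hpi N [::] ((x1, x2) : hist R 0) x0 y0).
Qed.
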